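(* Given a word sequence $X$ of length $\ell=O(\sqrt{w})$, one can compute $\mathsf{pmin}(X)$ in $O(1)$ time on the UWRAM.
   Context: Model of computation (UWRAM, ultra-wide word RAM): a word RAM with $w$-bit words supporting standard arithmetic, bitwise boolean operations and shifts on words in unit time. In addition there are ultrawords of $w^2$ bits, on which addition, subtraction, shifts and bitwise boolean operations take unit time. A word sequence $X$ of length $\ell$ is a sequence of $\ell$ words numbered from right to left starting at $0$; $X\langle i\rangle$ denotes its $i$-th word; a word sequence of length $O(w)$ is stored in $O(1)$ ultrawords. The model supports in unit time: reading/writing a single word or $w$ contiguous words; scattered read (given a word sequence $A$ of $w$ addresses, produce $X$ with $X\langle i\rangle$ equal to the content of memory address $A\langle i\rangle$; addresses may repeat); scattered write (given word sequences $X$ and $A$, with the addresses in $A$ distinct, set the content of address $A\langle i\rangle$ to $X\langle i\rangle$); compress (map a word sequence of length $\ell\le w$ whose words are each $0$ or $1$ to the $\ell$-bit string of those bits); spread (the inverse of compress). Time is the number of instructions. Precomputed constant word sequences are assumed available. Prefix minimum: for a word sequence $X$ of length $\ell$, $\mathsf{pmin}(X)$ is the word sequence $P$ of length $\ell$ with $P\langle i\rangle=\min(X\langle i\rangle,X\langle i-1\rangle,\dots,X\langle 0\rangle)$ for $0\le i<\ell$. *)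

(* Defs.v *)
From Stdlib Require List.
From mathcomp Require Import all_boot.

Set Implicit Arguments.
Unset Strict Implicit.
Unset Printing Implicit Defensive.

Fixpoint pmin_at (X : seq nat) (i : nat) : nat :=
  match i with
  | 0 => nth 0 X 0
  | i'.+1 => minn (pmin_at X i') (nth 0 X i'.+1)
  end.

(* a word is a nat < 2^w ; an ultraword is a nat < 2^(w^2), i.e. w words;
   word i of an ultraword occupies bits [i*w, (i+1)*w) (numbered right to left) *)
Definition wmod (w a : nat) : nat := a %% 2 ^ w.
Definition umod (w a : nat) : nat := a %% 2 ^ (w * w).
Definition uword (w u i : nat) : nat := (u %/ 2 ^ (i * w)) %% 2 ^ w.
Definition mk_ultra (w : nat) (f : nat -> nat) : nat :=
  sumn [seq (f i %% 2 ^ w) * 2 ^ (i * w) | i <- iota 0 w].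

Inductive wop := WAdd | WSub | WMul | WDiv | WMod | WAnd | WOr | WXor
               | WShl | WShr | WLt | WEq.
Inductive uop := UAdd | USub | UAnd | UOr | UXor.

Inductive instr :=
  | WConst  (d c : nat)
  | WBin    (o : wop) (d a b : nat)
  | WNot    (d a : nat)
  | UConst  (d c : nat)              (* ur d := c (precomputed constant)     *)
  | UBin    (o : uop) (d a b : nat)
  | UShl    (d a k : nat)
  | UShr    (d a k : nat)
  | UNot    (d a : nat)
  | WLoad   (d a : nat)
  | WStore  (a s : nat)
  | ULoad   (d a : nat)
  | UStore  (a s : nat)
  | UGather (d a : nat)
  | UScatter (a s : nat)             (* scattered write, distinct addresses  *)
  | Compress (d s : nat)
  | Spread  (d s : nat)
  | Jz      (r t : nat)
  | Jmp     (t : nat).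

Definition program := seq instr.

Record state := State {
  pc  : nat;
  wr  : nat -> nat;
  ur  : nat -> nat;
  mem : nat -> nat
}.

Definition upd (f : nat -> nat) (i v : nat) : nat -> nat :=
  fun j => if j == i then v else f j.

Definition wbin (w : nat) (o : wop) (x y : nat) : option nat :=
  match o with
  | WAdd => Some (wmod w (x + y))
  | WSub => Some (wmod w (x + 2 ^ w - wmod w y))
  | WMul => Some (wmod w (x * y))
  | WDiv => if y == 0 then None else Some (x %/ y)
  | WMod => if y == 0 then None else Some (x %% y)
  | WAnd => Some (wmod w (Nat.land x y))
  | WOr  => Some (wmod w (Nat.lor x y))
  | WXor => Some (wmod w (Nat.lxor x y))
  | WShl => Some (wmod w (x * 2 ^ y))
  | WShr => Some (x %/ 2 ^ y)
  | WLt  => Some (nat_of_bool (x < y))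
  | WEq  => Some (nat_of_bool (x == y))
  end.

Definition ubin (w : nat) (o : uop) (x y : nat) : nat :=
  match o with
  | UAdd => umod w (x + y)
  | USub => umod w (x + 2 ^ (w * w) - umod w y)
  | UAnd => umod w (Nat.land x y)
  | UOr  => umod w (Nat.lor x y)
  | UXor => umod w (Nat.lxor x y)
  end.

(* one instruction; None = the machine is stuck (illegal operation:
   division by zero, scattered write with repeated addresses, compress
   of a sequence whose words are not all 0/1).  A halted machine
   (pc beyond the program) stays put. *)
Definition step (w : nat) (p : program) (s : state) : option state :=
  let 'State pc0 R U M := s in
  let nxt R' U' M' := Some (State pc0.+1 R' U' M') in
  match List.nth_error p pc0 with
  | None => Some s
  | Some i =>
    match i with
    | WConst d c => nxt (upd R d (wmod w c)) U M
    | WBin o d a b =>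
        match wbin w o (R a) (R b) with
        | Some v => nxt (upd R d v) U M
        | None => None
        end
    | WNot d a => nxt (upd R d (2 ^ w - 1 - R a)) U M
    | UConst d c => nxt R (upd U d (umod w c)) M
    | UBin o d a b => nxt R (upd U d (ubin w o (U a) (U b))) M
    | UShl d a k => nxt R (upd U d (umod w (U a * 2 ^ R k))) M
    | UShr d a k => nxt R (upd U d (U a %/ 2 ^ R k)) M
    | UNot d a => nxt R (upd U d (2 ^ (w * w) - 1 - U a)) M
    | WLoad d a => nxt (upd R d (M (R a))) U M
    | WStore a s0 => nxt R U (upd M (R a) (R s0))
    | ULoad d a => nxt R (upd U d (mk_ultra w (fun i => M (R a + i)))) M
    | UStore a s0 =>
        nxt R U (fun j => if (R a <= j) && (j < R a + w)
                          then uword w (U s0) (j - R a) else M j)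
    | UGather d a => nxt R (upd U d (mk_ultra w (fun i => M (uword w (U a) i)))) M
    | UScatter a s0 =>
        let addrs := [seq uword w (U a) i | i <- iota 0 w] in
        if uniq addrs then
          nxt R U (fun j => if j \in addrs
                            then uword w (U s0) (index j addrs) else M j)
        else None
    | Compress d s0 =>
        if all (fun i => uword w (U s0) i <= 1) (iota 0 w) then
          nxt (upd R d (sumn [seq uword w (U s0) i * 2 ^ i | i <- iota 0 w])) U M
        else None
    | Spread d s0 => nxt R (upd U d (mk_ultra w (fun i => (R s0 %/ 2 ^ i) %% 2))) M
    | Jz r t => if R r == 0 then Some (State t R U M) else nxt R U M
    | Jmp t => Some (State t R U M)
    end
  end.

Fixpoint exec (w : nat) (p : program) (n : nat) (s : state) : option state :=
  match n with
  | 0 => Some s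
  | n'.+1 => obind (exec w p n') (step w p s)
  end.

Definition halted (p : program) (s : state) : Prop := size p <= pc s.

Definition init_state (X : seq nat) : state :=
  State 0 (fun _ => 0) (fun _ => 0)
        (fun j => if j < size X then nth 0 X j else 0).

Definition computes_pmin_in (w l T : nat) (p : program) : Prop :=
  forall X : seq nat, size X = l -> all (fun x => x < 2 ^ w) X ->
    exists s, exec w p T (init_state X) = Some s /\ halted p s /\
      forall i, i < l -> mem s i = pmin_at X i.

(* Main.v *)
From Stdlib Require Import Arith.
Require Import Defs.
From mathcomp Require Import all_boot zify.
Set Implicit Arguments.
Unset Strict Implicit.
Unset Printing Implicit Defensive.

Lemma powE a b : Nat.pow a b = a ^ b.
Proof. elim: b => [|b IH] //=. by rewrite expnS IH mulnE. Qed.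

Lemma divE a b : 0 < b -> Nat.div a b = a %/ b.
Proof. move=> hb. symmetry. apply: (Nat.div_unique _ _ _ (a %% b)).
 - apply/ltP; by rewrite ltn_mod.
 - rewrite {1}(divn_eq a b) mulnC. by [].
Qed.

Lemma modE a b : 0 < b -> Nat.modulo a b = a %% b.
Proof. move=> hb. symmetry. apply: (Nat.mod_unique _ _ (a %/ b)).
 - apply/ltP; by rewrite ltn_mod.
 - rewrite {1}(divn_eq a b) mulnC. by [].
Qed.

Lemma uword_ones w u t : uword w u t = Nat.land (Nat.shiftr u (t*w)) (Nat.ones w).
Proof.
rewrite Nat.land_ones Nat.shiftr_div_pow2 !powE divE ?expn_gt0 // modE ?expn_gt0 //.
Qed.

Lemma uword_land w x y t :
  uword w (Nat.land x y) t = Nat.land (uword w x t) (uword w y t).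
Proof.
rewrite !uword_ones Nat.shiftr_land.
set a := Nat.shiftr x _; set b := Nat.shiftr y _; set o := Nat.ones w.
rewrite -!Nat.land_assoc; congr Nat.land.
rewrite [Nat.land o (Nat.land b o)]Nat.land_comm -Nat.land_assoc Nat.land_diag.
by rewrite Nat.land_comm.
Qed.

Lemma mod_div_mod x A C D : 0 < A -> D %| C ->
  (x %% (A * C)) %/ A %% D = x %/ A %% D.
Proof.
move=> hA /dvdnP [E ->].
rewrite {2}(divn_eq x (A * (E * D))).
have -> : x %/ (A * (E * D)) * (A * (E * D)) = (x %/ (A * (E * D)) * E * D) * A.
  by nia.
rewrite divnMDl // -modnDm modnMl add0n modn_mod //.
Qed.

Lemma uword_umod w x t : t < w -> uword w (umod w x) t = uword w x t.
Proof.
move=> ht; rewrite /uword /umod.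
have -> : w * w = t * w + (w - t) * w by rewrite -mulnDl subnKC // ltnW.
rewrite expnD mod_div_mod ?expn_gt0 //.
apply: dvdn_exp2l. by rewrite leq_pmull // subn_gt0.
Qed.

Fixpoint bsum (w L n : nat) (f : nat -> nat) : nat :=
  match n with
  | 0 => 0
  | n'.+1 => bsum w L n' f + f n' * 2 ^ (n' * L * w)
  end.

Lemma bsum_lt w L n f : (forall i, i < n -> f i < 2 ^ (L * w)) ->
  bsum w L n f < 2 ^ (n * L * w).
Proof.
elim: n => [|n IH] H /=; first by rewrite expn_gt0.
have h1 := IH (fun i hi => H i (ltnW hi)).
have h2 := H n (ltnSn n).
have -> : n.+1 * L * w = n * L * w + L * w by rewrite mulSn mulnDl addnC.
rewrite expnD.
apply: (@leq_trans (2 ^ (n * L * w) + (2 ^ (L * w)).-1 * 2 ^ (n * L * w))).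
  rewrite -addSn leq_add // leq_mul2r -ltnS prednK ?expn_gt0 // h2 orbT //.
rewrite -[X in X + _]mul1n -mulnDl add1n prednK ?expn_gt0 // mulnC //.
Qed.

Lemma bsum_ext w L n f g : (forall i, i < n -> f i = g i) -> bsum w L n f = bsum w L n g.
Proof.
elim: n => [|n IH] H //=. rewrite IH ?H // => i hi; apply: H; exact: ltnW.
Qed.

Lemma bsum_split w L k n f :
  bsum w L (k + n) f = bsum w L k f + 2 ^ (k * L * w) * bsum w L n (fun i => f (k + i)).
Proof.
elim: n => [|n IH] /=; first by rewrite addn0 muln0 addn0.
rewrite addnS /= IH mulnDr addnA; congr (_ + _).
rewrite mulnCA -expnD; congr (_ * 2 ^ _). rewrite !mulnDl //.
Qed.

Lemma bsum_add w L n f g : bsum w L n f + bsum w L n g = bsum w L n (fun i => f i + g i).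
Proof. elim: n => [|n IH] //=. rewrite -IH mulnDl. set P := f n * _; set Q := g n * _. lia. Qed.

Lemma bsum_sub w L n f g : (forall i, i < n -> g i <= f i) ->
  bsum w L n f - bsum w L n g = bsum w L n (fun i => f i - g i).
Proof.
move=> H.
have -> : bsum w L n f = bsum w L n (fun i => (f i - g i) + g i).
  by apply: bsum_ext => i hi; rewrite subnK // H.
by rewrite -bsum_add addnK.
Qed.

Lemma bsum_tail w L k n f : k <= n -> (forall i, k <= i < n -> f i = 0) ->
  bsum w L n f = bsum w L k f.
Proof.
move=> hk H. rewrite -(subnKC hk) bsum_split.
rewrite (@bsum_ext w L (n-k) (fun i => f (k+i)) (fun _ => 0)); last first.
  move=> i hi; apply: H. lia.
suff -> : bsum w L (n - k) (fun _ => 0) = 0 by rewrite muln0 addn0.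
elim: (n - k) => [|m IH] //=; by rewrite IH.
Qed.

Lemma bsum1 w L g : bsum w L 1 g = g 0.
Proof. by rewrite /= mul0n expn0 muln1 add0n. Qed.

Lemma bsum_digit w L n f t : 0 < L -> (forall i, i < n -> f i < 2 ^ (L * w)) ->
  t < n * L -> uword w (bsum w L n f) t = f (t %/ L) %/ 2 ^ (t %% L * w) %% 2 ^ w.
Proof.
move=> hL hf ht.
set q := t %/ L; set r := t %% L.
have hq : q < n by rewrite /q ltn_divLR.
have hr : r < L by rewrite /r ltn_mod.
have hn : n = q + (1 + (n - q - 1)) by lia.
rewrite /uword hn bsum_split bsum_split bsum1 addn0.
set lo := bsum w L q f; set rest := bsum w L _ _.
have hlo : lo < 2 ^ (q * L * w) by apply: bsum_lt => i hi; apply: hf; lia.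
have -> : t * w = q * L * w + r * w by rewrite {1}(divn_eq t L) mulnDl.
rewrite expnD divnMA addnC mulnC divnMDl ?expn_gt0 // (divn_small hlo) addn0.
have -> : 2 ^ (1 * L * w) * rest = (2 ^ ((L - r - 1) * w) * rest * 2 ^ w) * 2 ^ (r * w).
  have e : 1 * L * w = (L - r - 1) * w + w + r * w.
    rewrite -[X in _ + X + _]mul1n -!mulnDl mul1n; congr (_ * _); lia.
  rewrite e !expnD. set A := 2 ^ _; set B := 2 ^ w; set C := 2 ^ _. nia.
rewrite addnC divnMDl ?expn_gt0 // modnMDl //.
Qed.

Lemma bsum_digit_high w L n f t : (forall i, i < n -> f i < 2 ^ (L * w)) ->
  n * L <= t -> uword w (bsum w L n f) t = 0.
Proof.
move=> hf ht. rewrite /uword divn_small ?mod0n //.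
apply: (leq_trans (bsum_lt hf)). rewrite leq_exp2l // leq_mul2r ht orbT //.
Qed.

Lemma uword_eq w n x y : x < 2 ^ (n * w) -> y < 2 ^ (n * w) ->
  (forall t, t < n -> uword w x t = uword w y t) -> x = y.
Proof.
elim: n x y => [|n IH] x y hx hy H.
  by move: hx hy; rewrite mul0n expn0 !ltnS !leqn0 => /eqP -> /eqP ->.
rewrite (divn_eq x (2 ^ w)) (divn_eq y (2 ^ w)).
have h0 := H 0 (ltn0Sn n); rewrite /uword !mul0n expn0 !divn1 in h0.
rewrite h0; congr (_ * _ + _).
apply: IH.
- by rewrite ltn_divLR ?expn_gt0 // -expnD addnC -mulSn.
- by rewrite ltn_divLR ?expn_gt0 // -expnD addnC -mulSn.
- move=> t ht; have := H t.+1 ht; rewrite /uword mulSn expnD -!divnMA //.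
Qed.

Lemma bsum_regroup w L R n g :
  bsum w L (R * n) g = bsum w (n * L) R (fun r => bsum w L n (fun k => g (r * n + k))).
Proof.
elim: R => [|R IH]; first by rewrite mul0n.
rewrite mulSnr bsum_split IH /=. congr (_ + _).
rewrite mulnC; congr (_ * 2 ^ _); lia.
Qed.

Lemma mk_ultra_bsum w f : mk_ultra w f = bsum w 1 w (fun i => f i %% 2 ^ w).
Proof.
rewrite /mk_ultra.
suff H : forall n, sumn [seq (f i %% 2 ^ w) * 2 ^ (i * w) | i <- iota 0 n]
                   = bsum w 1 n (fun i => f i %% 2 ^ w) by apply: H.
elim => [|n IH] //.
have -> : iota 0 n.+1 = iota 0 n ++ [:: n] by rewrite -addn1 iotaD.
rewrite map_cat sumn_cat IH /= addn0 muln1 //.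
Qed.

Lemma bsum_digit1 w n f t : (forall i, i < n -> f i < 2 ^ w) -> t < n ->
  uword w (bsum w 1 n f) t = f t.
Proof.
move=> hf ht. rewrite bsum_digit //; last by rewrite muln1.
  by rewrite divn1 modn1 mul0n expn0 divn1 modn_small // hf.
by move=> i hi; rewrite mul1n hf.
Qed.

Section Comb.
Variable X : seq nat.
Notation x k := (nth 0 X k).

Definition badb (j k : nat) : bool := if k < j then x k <= x j else x k < x j.
Definition goodp (i j : nat) : bool := (j <= i) && all (fun k => ~~ badb j k) (iota 0 i.+1).

Lemma goodpP i j : reflect (j <= i /\ forall k, k <= i -> ~~ badb j k) (goodp i j).
Proof.
apply: (iffP andP) => [[h1 /allP h2]|[h1 h2]]; split => //.
- move=> k hk; apply: h2; rewrite mem_iota; lia.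
- apply/allP => k; rewrite mem_iota => hk; apply: h2; lia.
Qed.

Lemma pmin_le i k : k <= i -> pmin_at X i <= x k.
Proof.
elim: i => [|i IH] /=; first by rewrite leqn0 => /eqP ->.
rewrite leq_eqVlt => /orP [/eqP ->|hk]; first by rewrite geq_minr.
by rewrite geq_min IH.
Qed.

Lemma pmin_ex i : exists2 k, k <= i & pmin_at X i = x k.
Proof.
elim: i => [|i [k hk IH]] /=; first by exists 0.
case: (leqP (pmin_at X i) (x i.+1)) => h.
- exists k; lia.
- exists i.+1 => //; lia.
Qed.

Lemma good_pmin i j : goodp i j -> x j = pmin_at X i.
Proof.
move/goodpP => [hj H].
have [k hk e] := pmin_ex i.
apply/eqP; rewrite eqn_leq pmin_le // andbT e.
have := H k hk; rewrite /badb; case: ltnP => _; lia.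
Qed.

Lemma good_uniq i j1 j2 : goodp i j1 -> goodp i j2 -> j1 = j2.
Proof.
wlog: j1 j2 / j1 <= j2.
  move=> W h1 h2; case: (leqP j1 j2) => h; first exact: W.
  symmetry; apply: W => //; exact: ltnW.
move=> hle /goodpP [h1 H1] /goodpP [h2 H2].
apply/eqP; rewrite eqn_leq hle /= leqNgt; apply/negP => hlt.
have := H1 j2 h2; have := H2 j1 (leq_trans hle h2).
rewrite /badb hlt; case: ltnP => _; lia.
Qed.

Lemma good_ex i : exists2 j, j <= i & goodp i j.
Proof.
have [k0 hk0 e0] := pmin_ex i.
have hex : exists k, (k <= i) && (x k == pmin_at X i) by exists k0; rewrite hk0 e0 eqxx.
case: (ex_minnP hex) => j /andP [hj /eqP ej] hmin.
exists j => //; apply/goodpP; split => // k hk; rewrite /badb.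
case: ltnP => hkj.
- apply/negP => hle.
  have h2 : pmin_at X i <= x k by apply: pmin_le.
  rewrite -ej in h2. have ekj : x k = x j by lia.
  have := hmin k; rewrite hk /= ekj ej eqxx => /(_ isT); lia.
- rewrite -leqNgt ej; exact: pmin_le.
Qed.

End Comb.

Lemma bsum_ge w L n f k : k < n -> f k * 2 ^ (k * L * w) <= bsum w L n f.
Proof.
elim: n => [|n IH] //= hk.
move: hk; rewrite ltnS leq_eqVlt => /orP [/eqP ->|hk]; first by rewrite leq_addl.
by rewrite (leq_trans (IH hk)) // leq_addr.
Qed.

Lemma bsum0 w L n : bsum w L n (fun _ => 0) = 0.
Proof. by elim: n => //= n ->. Qed.

Lemma bsum_eq0 w L n f : (forall k, k < n -> f k = 0) -> bsum w L n f = 0.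
Proof. move=> H; rewrite (@bsum_ext _ _ _ _ (fun _ => 0)) ?bsum0 //. Qed.

Lemma borrow_digit w n bb kap : 0 < w -> (forall k, k < n -> bb k <= 1) -> kap < n ->
  bb n.-1 = 1 ->
  ((bsum w 2 n (fun k => bb k * 2 ^ w) - 2 ^ w) %/ 2 ^ ((2 * kap + 1) * w)) %% 2 ^ w
  = if all (fun k => bb k == 0) (iota 0 kap) then (if bb kap == 1 then 0 else 2 ^ w - 1)
    else bb kap.
Proof.
move=> hw hb hk hg.
have hn : n = kap + (1 + (n - kap - 1)) by lia.
rewrite {1}hn bsum_split bsum_split bsum1 addn0.
set lo := bsum w 2 kap _; set rest := bsum w 2 (n - kap - 1) _.
set D := 2 ^ ((2 * kap + 1) * w).
have hD1 : 2 ^ w <= D by rewrite leq_exp2l //; lia.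
have hDp : 0 < D by rewrite expn_gt0.
have hbk : bb kap <= 1 by apply: hb.
have hlo : lo < 2 ^ (kap * 2 * w).
  apply: bsum_lt => i hi; have := hb i (ltn_trans hi hk).
  case: (bb i) => [|[|//]] _; rewrite ?mul0n ?mul1n ?expn_gt0 //.
  rewrite ltn_exp2l //; lia.
have hloD : lo < D.
  apply: (leq_trans hlo); rewrite leq_exp2l //; lia.
have eV : 2 ^ (kap * 2 * w) * (bb kap * 2 ^ w + 2 ^ (1 * 2 * w) * rest)
          = D * (bb kap + 2 ^ w * rest).
  have -> : D = 2 ^ (kap * 2 * w) * 2 ^ w by rewrite /D -expnD; congr (2 ^ _); lia.
  have -> : 2 ^ (1 * 2 * w) = 2 ^ w * 2 ^ w by rewrite -expnD; congr (2 ^ _); lia.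
  set P := 2 ^ (kap * 2 * w); set Bw := 2 ^ w. nia.
rewrite eV.
set hh := bb kap + 2 ^ w * rest.
case: ifP => hall.
- have lo0 : lo = 0.
    apply: bsum_eq0 => k hk'; move/allP: hall => /(_ k); rewrite mem_iota add0n hk' /=.
    by move=> /(_ isT) /eqP ->.
  rewrite lo0 add0n.
  have hh1 : 1 <= hh.
    case: (ltnP kap n.-1) => hk2.
    + have : 2 ^ w * 2 ^ ((n - kap - 2) * 2 * w) <= rest.
        have := @bsum_ge w 2 (n - kap - 1) (fun i => bb (kap + (1 + i)) * 2 ^ w) (n - kap - 2).
        have -> : kap + (1 + (n - kap - 2)) = n.-1 by lia.
        rewrite hg mul1n; apply; lia.
      move=> h; have h1 : 1 <= rest.
        apply: leq_trans h; by rewrite muln_gt0 !expn_gt0.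
      have := expn_gt0 2 w; rewrite /hh; nia.
    + have e : kap = n.-1 by lia. by rewrite /hh e hg.
  have -> : D * hh - 2 ^ w = (hh - 1) * D + (D - 2 ^ w).
    rewrite mulnBl mul1n addnBA // subnK; first by rewrite mulnC.
    by rewrite -{1}(mul1n D) leq_mul2r hh1 orbT.
  rewrite divnMDl // divn_small ?addn0; last by rewrite ltn_subrL expn_gt0 hDp.
  move: hbk hh1; rewrite /hh; case: (bb kap) => [|[|//]] _ /=.
  + rewrite add0n => h1.
    have -> : 2 ^ w * rest - 1 = (rest - 1) * 2 ^ w + (2 ^ w - 1).
      have hr : 1 <= rest by move: h1; rewrite muln_gt0 => /andP [_ ->].
      rewrite mulnBl mul1n [rest * _]mulnC addnBA ?expn_gt0 // subnK //.
      by rewrite -{1}(muln1 (2 ^ w)) leq_mul2l hr orbT.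
    by rewrite modnMDl modn_small // ltn_subrL !expn_gt0.
  + move=> _; by rewrite add1n subn1 /= mulnC modnMl.
- have [k hk1 hk2] : exists2 k, k < kap & bb k = 1.
    move/negbT: hall => /allPn [k]; rewrite mem_iota add0n => hk1 hk2.
    exists k => //; have := hb k (ltn_trans hk1 hk); move: hk2; case: (bb k) => [|[|]] //.
  have hlo2 : 2 ^ w <= lo.
    apply: leq_trans (bsum_ge w 2 (fun k => bb k * 2 ^ w) hk1).
    rewrite hk2 mul1n leq_pmulr // expn_gt0 //.
  rewrite -addnBAC // addnC mulnC divnMDl // divn_small ?addn0; last first.
    by apply: leq_ltn_trans hloD; rewrite leq_subr.
  rewrite /hh addnC mulnC modnMDl modn_small //.
  by apply: leq_ltn_trans hbk _; rewrite -{1}(expn0 2) ltn_exp2l.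
Qed.

Definition jof (l R c s : nat) := c * R + s %/ l.+1.
Definition colof (l s : nat) := s %% l.+1.
Definition inrow (l R c s : nat) := (s < R * l.+1) && (jof l R c s < l).
Definition cmpb (l R c s : nat) := inrow l R c s && (colof l s < l).
Definition grdb (l R c s : nat) := inrow l R c s && (colof l s == l).
Definition es (l R c s : nat) : nat :=
  if cmpb l R c s then jof l R c s <= colof l s else ~~ grdb l R c s.

Definition APd w l R c t := if ~~ odd t && cmpb l R c t./2 then w + jof l R c t./2 else 2 * w.
Definition AQd w l R c t := if ~~ odd t && cmpb l R c t./2 then w + colof l t./2 else 2 * w.
Definition Jd w l t := 4 * w + 2 * t + colof l t./2 %% 2.
Definition vK l R c t := odd t && cmpb l R c t./2 && (jof l R c t./2 <= colof l t./2).
Definition Kd w l R c t := if vK l R c t then Jd w l t - colof l t./2 else 0.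
Definition AVd w l R c t := w + jof l R c t./2.

Definition cAP w l R c := bsum w 1 w (APd w l R c).
Definition cAQ w l R c := bsum w 1 w (AQd w l R c).
Definition cEC w l R c := bsum w 2 w./2 (fun s => 2 ^ w - es l R c s).
Definition cHM w := bsum w 2 w./2 (fun _ => 2 ^ w).
Definition cON w l R c := bsum w (l.+1 * 2) R (fun r => (c * R + r < l) * 2 ^ w).
Definition cK w l R c := bsum w 1 w (Kd w l R c).
Definition cJ w l := bsum w 1 w (Jd w l).
Definition cAV w l R c := bsum w 1 w (AVd w l R c).

Lemma pair_conv w d : (forall t, w./2 * 2 <= t < w -> d t = 0) ->
  bsum w 1 w d = bsum w 2 w./2 (fun s => d (s * 2) + d (s * 2 + 1) * 2 ^ w).
Proof.
move=> H. rewrite (@bsum_tail w 1 (w./2 * 2) w d); last by [].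
  rewrite bsum_regroup; apply: bsum_ext => s _.
  rewrite /= mul0n expn0 muln1 add0n addn0 !mul1n. done.
have := odd_double_half w; rewrite -muln2; lia.
Qed.

Lemma div_pow_bit a b e w : a < 2 ^ w -> b < 2 ^ w -> e <= 1 ->
  (a + (2 ^ w - e) - b) %/ 2 ^ w = (b + e <= a).
Proof.
move=> ha hb he. have hp := expn_gt0 2 w.
case: leqP => h.
- have -> : a + (2 ^ w - e) - b = 1 * 2 ^ w + (a - b - e) by lia.
  by rewrite divnMDl // divn_small ?addn0 //; lia.
- by rewrite divn_small //; lia.
Qed.

Lemma usub_eq w x y : y <= x -> x < 2 ^ (w * w) -> ubin w USub x y = x - y.
Proof.
move=> hyx hx. rewrite /ubin /umod (modn_small (leq_ltn_trans hyx hx)).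
have -> : x + 2 ^ (w * w) - y = (x - y) + 1 * 2 ^ (w * w) by lia.
by rewrite addnC modnMDl modn_small // (leq_ltn_trans (leq_subr _ _) hx).
Qed.

Lemma gather_bsum w M d : (forall t, t < w -> d t < 2 ^ w) ->
  mk_ultra w (fun t => M (uword w (umod w (bsum w 1 w d)) t)) =
  bsum w 1 w (fun t => M (d t) %% 2 ^ w).
Proof.
move=> hd; rewrite mk_ultra_bsum; apply: bsum_ext => t ht.
by rewrite uword_umod // bsum_digit1.
Qed.

Lemma bsum_lt_ww w L n f : n * L <= w -> (forall i, i < n -> f i < 2 ^ (L * w)) ->
  bsum w L n f < 2 ^ (w * w).
Proof.
move=> hn hf; apply: (leq_trans (bsum_lt hf)); rewrite leq_exp2l // leq_mul2r hn orbT //.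
Qed.

Lemma umod_id w x : x < 2 ^ (w * w) -> umod w x = x.
Proof. exact: modn_small. Qed.

Section ChunkVals.
Variables (w l R c : nat) (X : seq nat) (M : nat -> nat).
Hypothesis hRL : R * l.+1 <= w./2.
Hypothesis hcR : c * R < l.
Hypothesis hlw : l < w.
Hypothesis hB : 8 * w <= 2 ^ w.
Hypothesis hX : forall k, k < l -> nth 0 X k < 2 ^ w.
Hypothesis hM : forall k, k < l -> M (w + k) = nth 0 X k.
Hypothesis hZ : M (2 * w) = 0.

Notation x k := (nth 0 X k).
Notation S := w./2.
Notation cmp := (cmpb l R c).
Notation j := (jof l R c).
Notation col := (colof l).

Definition Pv s := if cmp s then x (j s) else 0.
Definition Qv s := if cmp s then x (col s) else 0.

Lemma hw0 : 0 < w. Proof. lia. Qed.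
Lemma hS2 : S * 2 <= w. Proof. have := odd_double_half w; rewrite -muln2; lia. Qed.

Lemma cmp_j s : cmp s -> j s < l.
Proof. by rewrite /cmpb /inrow => /andP [/andP [_ ->]]. Qed.
Lemma cmp_col s : cmp s -> col s < l.
Proof. by rewrite /cmpb => /andP [_ ->]. Qed.
Lemma cmp_s s : cmp s -> s < R * l.+1.
Proof. by rewrite /cmpb /inrow => /andP [/andP [-> _]]. Qed.

Lemma noinrow s : S <= s -> inrow l R c s = false.
Proof. move=> h; rewrite /inrow; apply/andP => [[h1 _]]; lia. Qed.

Lemma U1_eq : mk_ultra w (fun t => M (uword w (umod w (cAP w l R c)) t)) = bsum w 2 S Pv.
Proof.
rewrite /cAP gather_bsum; last first.
  move=> t ht; rewrite /APd; case: ifP => [/andP [_ /cmp_j h]|_]; lia.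
rewrite pair_conv.
  apply: bsum_ext => s _; rewrite /APd /Pv oddD oddM /= andbF /=.
  have -> : (s * 2)./2 = s by rewrite muln2 doubleK.
  case: ifP => h; last by rewrite hZ mod0n mul0n addn0.
  by rewrite hM ?cmp_j // modn_small ?hX ?cmp_j // hZ mod0n mul0n addn0.
move=> t /andP [h1 h2]; rewrite /APd.
have -> : cmp t./2 = false by rewrite /cmpb noinrow //; have := odd_double_half t; lia.
by rewrite andbF hZ mod0n.
Qed.

Lemma U2_eq : mk_ultra w (fun t => M (uword w (umod w (cAQ w l R c)) t)) = bsum w 2 S Qv.
Proof.
rewrite /cAQ gather_bsum; last first.
  move=> t ht; rewrite /AQd; case: ifP => [/andP [_ /cmp_col h]|_]; lia.
rewrite pair_conv.
  apply: bsum_ext => s _; rewrite /AQd /Qv oddD oddM /= andbF /=.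
  have -> : (s * 2)./2 = s by rewrite muln2 doubleK.
  case: ifP => h; last by rewrite hZ mod0n mul0n addn0.
  by rewrite hM ?cmp_col // modn_small ?hX ?cmp_col // hZ mod0n mul0n addn0.
move=> t /andP [h1 h2]; rewrite /AQd.
have -> : cmp t./2 = false by rewrite /cmpb noinrow //; have := odd_double_half t; lia.
by rewrite andbF hZ mod0n.
Qed.


Lemma es_le1 s : es l R c s <= 1.
Proof. rewrite /es; case: ifP => _; exact: leq_b1. Qed.

Lemma Pv_lt s : Pv s < 2 ^ w.
Proof. rewrite /Pv; case: ifP => h; [exact/hX/cmp_j | exact: expn_gt0]. Qed.
Lemma Qv_lt s : Qv s < 2 ^ w.
Proof. rewrite /Qv; case: ifP => h; [exact/hX/cmp_col | exact: expn_gt0]. Qed.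

Lemma pow_lt2 : 2 ^ w + 2 ^ w <= 2 ^ (2 * w).
Proof.
have h2 : 2 <= 2 ^ w by apply: leq_trans hB; have := hw0; lia.
rewrite mul2n -addnn expnD; nia.
Qed.

Definition cs s := Pv s + (2 ^ w - es l R c s) - Qv s.
Definition bb s := cs s %/ 2 ^ w.

Lemma U3_eq : ubin w UAdd (bsum w 2 S Pv) (umod w (cEC w l R c)) =
              bsum w 2 S (fun s => Pv s + (2 ^ w - es l R c s)).
Proof.
have hp := expn_gt0 2 w.
rewrite /ubin /cEC (@umod_id w (bsum w 2 S (fun s => _))); last first.
  apply: bsum_lt_ww hS2 _ => i _; apply: leq_ltn_trans (leq_subr _ _) _.
  apply: leq_trans pow_lt2; lia.
rewrite bsum_add umod_id //. apply: bsum_lt_ww hS2 _ => i _.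
have := Pv_lt i; have := pow_lt2; lia.
Qed.

Lemma bsum_le w' L n f g : (forall i, i < n -> g i <= f i) -> bsum w' L n g <= bsum w' L n f.
Proof.
elim: n => [|n IH] H //=; rewrite leq_add ?IH ?leq_mul2r ?H ?orbT //.
by move=> i hi; apply: H; apply: ltnW.
Qed.

Lemma U4_eq : ubin w USub (bsum w 2 S (fun s => Pv s + (2 ^ w - es l R c s))) (bsum w 2 S Qv)
              = bsum w 2 S cs.
Proof.
have hg : forall i, i < S -> Qv i <= Pv i + (2 ^ w - es l R c i).
  by move=> i _; have := Qv_lt i; have := es_le1 i; lia.
rewrite usub_eq ?bsum_sub ?bsum_le //.
apply: bsum_lt_ww hS2 _ => i _; have := Pv_lt i; have := pow_lt2; lia.
Qed.

Lemma cs_lt s : cs s < 2 ^ (2 * w).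
Proof. rewrite /cs; have := Pv_lt s; have := pow_lt2; lia. Qed.

Lemma bb_eq s : bb s = if cmp s then badb X (j s) (col s) else grdb l R c s.
Proof.
rewrite /bb /cs div_pow_bit ?Pv_lt ?Qv_lt ?es_le1 // /Pv /Qv /es /badb.
case: ifP => h.
- case: (ltnP (col s) (j s)) => h2.
  + by rewrite addn0.
  + by rewrite addn1.
- by case: (grdb l R c s).
Qed.

Lemma bb_le1 s : bb s <= 1.
Proof. rewrite bb_eq; case: ifP => _; exact: leq_b1. Qed.


Lemma land_b1 b : b <= 1 -> Nat.land b 1 = b.
Proof. by case: b => [|[|]]. Qed.

Lemma two_le_pw : 2 <= 2 ^ w.
Proof. apply: leq_trans hB; have := hw0; lia. Qed.

Lemma U5_eq : umod w (Nat.land (bsum w 2 S cs) (umod w (cHM w))) =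
              bsum w 2 S (fun s => bb s * 2 ^ w).
Proof.
have hp := expn_gt0 2 w.
have hbb : forall i, i < S -> bb i * 2 ^ w < 2 ^ (2 * w).
  move=> i _; have := bb_le1 i; have := pow_lt2; nia.
have hcs : forall i, i < S -> cs i < 2 ^ (2 * w) by move=> i _; exact: cs_lt.
have hhm : forall i, i < S -> 2 ^ w < 2 ^ (2 * w) by move=> i _; have := pow_lt2; lia.
apply: (@uword_eq w w); first by rewrite /umod ltn_pmod ?expn_gt0.
  exact: bsum_lt_ww hS2 hbb.
move=> t ht; rewrite uword_umod // uword_land uword_umod //.
case: (ltnP t (S * 2)) => h.
- rewrite /cHM !bsum_digit //.
  have : t %% 2 < 2 by rewrite ltn_mod.
  case: (t %% 2) => [|[|//]] _.
  + by rewrite mul0n expn0 !divn1 modnn modnMl Nat.land_0_r.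
  + have hb1 : bb (t %/ 2) < 2 ^ w := leq_ltn_trans (bb_le1 _) two_le_pw.
    have e1 : 2 ^ w %/ 2 ^ w %% 2 ^ w = 1 by rewrite divnn hp modn_small // two_le_pw.
    have e2 : cs (t %/ 2) %/ 2 ^ w %% 2 ^ w = bb (t %/ 2) by rewrite modn_small.
    by rewrite mul1n e1 e2 mulnK // modn_small // land_b1 // bb_le1.
- by rewrite /cHM !(bsum_digit_high _ h).
Qed.


Definition Vrow r := bsum w 2 l.+1 (fun k => bb (r * l.+1 + k) * 2 ^ w).
Definition act r : nat := c * R + r < l.

Lemma slot_div r k : k < l.+1 -> (r * l.+1 + k) %/ l.+1 = r.
Proof. by move=> hk; rewrite divnMDl // divn_small // addn0. Qed.
Lemma slot_mod r k : k < l.+1 -> (r * l.+1 + k) %% l.+1 = k.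
Proof. by move=> hk; rewrite modnMDl modn_small. Qed.

Lemma slot_cmp r k : r < R -> c * R + r < l -> k < l ->
  [/\ cmp (r * l.+1 + k), col (r * l.+1 + k) = k & j (r * l.+1 + k) = c * R + r].
Proof.
move=> hr ha hk.
have hk1 : k < l.+1 by apply: ltnW.
have hj : j (r * l.+1 + k) = c * R + r by rewrite /jof slot_div.
have hc : col (r * l.+1 + k) = k by rewrite /colof slot_mod.
split => //; rewrite /cmpb /inrow hj hc ha hk andbT andbT.
nia.
Qed.

Lemma slot_grd r : r < R -> c * R + r < l -> bb (r * l.+1 + l) = 1.
Proof.
move=> hr ha.
have hk1 : l < l.+1 by [].
rewrite bb_eq /cmpb /grdb /inrow /colof /jof slot_div // slot_mod // ltnn eqxx ha !andbT andbF /=.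
nia.
Qed.

Lemma bbB_lt i : bb i * 2 ^ w < 2 ^ (2 * w).
Proof. have := bb_le1 i; have := pow_lt2; have := expn_gt0 2 w; nia. Qed.

Lemma U5_rows : bsum w 2 S (fun s => bb s * 2 ^ w) = bsum w (l.+1 * 2) R Vrow.
Proof.
rewrite (@bsum_tail w 2 (R * l.+1)) // ?bsum_regroup //.
move=> i /andP [h1 h2].
by rewrite bb_eq /cmpb /grdb /inrow ltnNge h1.
Qed.

Lemma Vrow_lt r : Vrow r < 2 ^ (l.+1 * 2 * w).
Proof. rewrite /Vrow; apply: bsum_lt => i _; exact: bbB_lt. Qed.

Lemma RL2 : R * (l.+1 * 2) <= w.
Proof. have := hS2; have := hRL; nia. Qed.

Lemma U6_eq : ubin w USub (bsum w (l.+1 * 2) R Vrow) (umod w (cON w l R c)) =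
              bsum w (l.+1 * 2) R (fun r => Vrow r - act r * 2 ^ w).
Proof.
have hle : forall r, r < R -> act r * 2 ^ w <= Vrow r.
  move=> r hr; rewrite /act; case: ltnP => ha; last by rewrite mul0n.
  apply: leq_trans (bsum_ge w 2 _ (ltnSn l)).
  rewrite slot_grd // mul1n leq_pmulr ?expn_gt0 //.
have hlt : forall r, r < R -> act r * 2 ^ w < 2 ^ (l.+1 * 2 * w).
  move=> r hr; apply: leq_ltn_trans (hle r hr) _; exact: Vrow_lt.
rewrite /cON umod_id; last by apply: bsum_lt_ww RL2 _; move=> r hr; exact: hlt.
rewrite usub_eq ?bsum_sub ?bsum_le //.
apply: bsum_lt_ww RL2 _ => r _; exact: Vrow_lt.
Qed.


Lemma Jd_lt t : t < w -> Jd w l t < 2 ^ w.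
Proof. move=> ht; rewrite /Jd; have := ltn_pmod (col t./2) (isT : 0 < 2); lia. Qed.

Lemma Kd_lt t : t < w -> Kd w l R c t < 2 ^ w.
Proof. move=> ht; rewrite /Kd; case: ifP => _; last exact: expn_gt0.
apply: leq_ltn_trans (leq_subr _ _) (Jd_lt ht). Qed.

Lemma Kd_even t : Kd w l R c t %% 2 = 0.
Proof. rewrite /Kd /Jd; case: ifP => _ //. set k := col t./2. lia. Qed.

Lemma land_ones_lt K : K < 2 ^ w -> Nat.land (2 ^ w - 1) K = K.
Proof.
move=> hK; rewrite Nat.land_comm subn1 -powE -Nat.ones_equiv Nat.land_ones powE modE.
  exact: modn_small.
exact: expn_gt0.
Qed.

Lemma land1_even K : K %% 2 = 0 -> Nat.land 1 K = 0.
Proof.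
move=> hK; rewrite Nat.land_comm.
have -> : 1 = Nat.ones 1 by [].
by rewrite Nat.land_ones modE.
Qed.

Lemma odd_split t : odd t -> t = t./2 * 2 + 1.
Proof. move=> h; have := odd_double_half t; rewrite h -muln2; lia. Qed.

Lemma div_pair s L : 0 < L -> (s * 2 + 1) %/ (L * 2) = s %/ L /\ (s * 2 + 1) %% (L * 2) = s %% L * 2 + 1.
Proof.
move=> hL.
have e : s * 2 + 1 = s %/ L * (L * 2) + (s %% L * 2 + 1).
  rewrite {1}(divn_eq s L); lia.
have hk : s %% L * 2 + 1 < L * 2 by have := ltn_pmod s hL; lia.
rewrite e; split.
  by rewrite divnMDl ?muln_gt0 ?hL // (divn_small hk) addn0.
by rewrite modnMDl modn_small.
Qed.

Definition validt t := vK l R c t && all (fun k => ~~ badb X (j t./2) k) (iota 0 (col t./2).+1).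

Lemma U7_eq : umod w (Nat.land (bsum w (l.+1 * 2) R (fun r => Vrow r - act r * 2 ^ w))
                                (umod w (cK w l R c))) =
              bsum w 1 w (fun t => if validt t then Kd w l R c t else 0).
Proof.
have hp := expn_gt0 2 w.
apply: (@uword_eq w w); first by rewrite /umod ltn_pmod ?expn_gt0.
  apply: bsum_lt_ww; first by rewrite muln1. move=> i hi; rewrite mul1n.
  by case: ifP => _; [exact: Kd_lt | exact: expn_gt0].
move=> t ht; rewrite uword_umod // uword_land uword_umod // /cK !bsum_digit1 //; first last.
- exact: Kd_lt.
- by move=> i hi; case: ifP => _; [exact: Kd_lt | exact: expn_gt0].
rewrite /validt.
case hv: (vK l R c t); last by rewrite /Kd hv Nat.land_0_r.
move: (hv); rewrite /vK => /andP [/andP [ho hc] hjk].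
set s := t./2.
have ets := odd_split ho.
have hsl : s < R * l.+1 by apply: cmp_s.
have [hq hr] := div_pair s (ltn0Sn l).
set r := s %/ l.+1.
have hrR : r < R by rewrite /r ltn_divLR.
have har : c * R + r < l by have := cmp_j hc.
have hkl : col s < l := cmp_col hc.
have esr : s = r * l.+1 + col s by rewrite /r /colof -divn_eq.
have hbr : forall k, k < l -> bb (r * l.+1 + k) = badb X (j s) k.
  move=> k hk; have [h1 h2 h3] := slot_cmp hrR har hk.
  by rewrite bb_eq h1 h2 h3.
rewrite bsum_digit //; first last.
- by rewrite ets; have := RL2; nia.
- move=> i hi; apply: leq_ltn_trans (leq_subr _ _) _; exact: Vrow_lt.
have hK := Kd_lt ht; have hKe := Kd_even t.
rewrite ets in hK hKe.
rewrite ets -/s hq hr /act har mul1n /Vrow -/r -[s %% l.+1]/(col s).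
rewrite -/s in hK hKe.
have -> : (col s * 2 + 1) * w = (2 * col s + 1) * w by rewrite [col s * 2]mulnC.
rewrite (@borrow_digit w l.+1 (fun k => bb (r * l.+1 + k)) (col s) hw0
           (fun k _ => bb_le1 _) (ltnW hkl)); last by rewrite /= slot_grd.
have eall : all (fun k => bb (r * l.+1 + k) == 0) (iota 0 (col s)) =
            all (fun k => ~~ badb X (j s) k) (iota 0 (col s)).
  apply: eq_in_all => k; rewrite mem_iota add0n => hk.
  by rewrite hbr //; [case: badb | lia].
rewrite eall hbr //.
have -> : iota 0 (col s).+1 = iota 0 (col s) ++ [:: col s] by rewrite -addn1 iotaD.
rewrite all_cat /= andbT.
case: (all _ _); case: (badb _ _) => /=.
- by rewrite Nat.land_0_l.
- by rewrite land_ones_lt.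
- by rewrite land1_even.
- by rewrite Nat.land_0_l.
Qed.


Definition Ad t := if validt t then col t./2 else Jd w l t.

Lemma validt_vK t : validt t -> vK l R c t.
Proof. by case/andP. Qed.

Lemma col_lt_Jd t t' : validt t -> col t./2 < Jd w l t'.
Proof.
move/validt_vK; rewrite /vK => /andP [/andP [_ hc] _].
have := cmp_col hc; rewrite /Jd; lia.
Qed.

Lemma Ad_lt t : t < w -> Ad t < 2 ^ w.
Proof.
move=> ht; rewrite /Ad; case: ifP => h; last exact: Jd_lt.
exact: ltn_trans (col_lt_Jd t h) (Jd_lt ht).
Qed.

Lemma U8_eq : ubin w USub (umod w (cJ w l)) (bsum w 1 w (fun t => if validt t then Kd w l R c t else 0))
              = bsum w 1 w Ad.
Proof.
have hle : forall t, t < w -> (if validt t then Kd w l R c t else 0) <= Jd w l t.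
  by move=> t _; case: ifP => h //; rewrite /Kd (validt_vK h) leq_subr.
have hJ : cJ w l < 2 ^ (w * w).
  by apply: bsum_lt_ww; [rewrite muln1 | move=> i hi; rewrite mul1n; exact: Jd_lt].
rewrite umod_id // usub_eq ?bsum_le // bsum_sub //; apply: bsum_ext => t ht.
rewrite /Ad; case: (boolP (validt t)) => h; last by rewrite subn0.
rewrite /Kd (validt_vK h) subKn //; exact: ltnW (col_lt_Jd t h).
Qed.

Lemma AVd_lt t : t < w -> AVd w l R c t < 2 ^ w.
Proof.
move=> ht; rewrite /AVd /jof.
have : t./2 %/ l.+1 <= t./2 by apply: leq_div.
have := half_leq (ltnW ht). have := half_leq (leqnn w). lia.
Qed.

Lemma uword_mk_ultra f t : t < w -> uword w (mk_ultra w f) t = f t %% 2 ^ w.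
Proof.
move=> ht; rewrite mk_ultra_bsum bsum_digit1 // => i _; exact: ltn_pmod (expn_gt0 2 w).
Qed.

Definition addrs := [seq uword w (bsum w 1 w Ad) i | i <- iota 0 w].

Lemma addrsE : addrs = [seq Ad i | i <- iota 0 w].
Proof.
apply/eq_in_map => t; rewrite mem_iota add0n => ht.
by rewrite bsum_digit1 // => i hi; exact: Ad_lt.
Qed.

Lemma validt_good t : validt t -> goodp X (col t./2) (j t./2) && (j t./2 < l).
Proof.
case/andP => hv hall; move: (hv); rewrite /vK => /andP [/andP [_ hc] hjk].
by rewrite /goodp hjk hall cmp_j.
Qed.

Lemma validt_odd t : validt t -> odd t.
Proof. by move/validt_vK; rewrite /vK => /andP [/andP [-> _] _]. Qed.

Lemma Ad_inj t1 t2 : t1 < w -> t2 < w -> Ad t1 = Ad t2 -> t1 = t2.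
Proof.
move=> h1 h2; rewrite /Ad.
case: ifP => v1; case: ifP => v2.
- move=> e.
  have /andP [g1 _] := validt_good v1; have /andP [g2 _] := validt_good v2.
  rewrite e in g1; have ej := good_uniq g1 g2.
  move: ej; rewrite /jof => /eqP; rewrite eqn_add2l => /eqP ej.
  have es2 : t1./2 = t2./2.
    by rewrite (divn_eq t1./2 l.+1) (divn_eq t2./2 l.+1) ej; move: e; rewrite /colof => ->.
  by rewrite (odd_split (validt_odd v1)) (odd_split (validt_odd v2)) es2.
- move=> e; have := col_lt_Jd t2 v1; lia.
- move=> e; have := col_lt_Jd t1 v2; lia.
- rewrite /Jd; have := ltn_pmod (col t1./2) (isT : 0 < 2);
  have := ltn_pmod (col t2./2) (isT : 0 < 2); lia.
Qed.

Lemma addrs_uniq : uniq addrs.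
Proof.
rewrite addrsE map_inj_in_uniq ?iota_uniq // => t1 t2.
rewrite !mem_iota !add0n; exact: Ad_inj.
Qed.

Definition Mnew := fun a => if a \in addrs
  then uword w (mk_ultra w (fun t => M (uword w (umod w (cAV w l R c)) t))) (index a addrs)
  else M a.

Lemma Mnew_keep a : w <= a <= 2 * w -> Mnew a = M a.
Proof.
move=> ha; rewrite /Mnew; case: ifP => // hin.
move: hin; rewrite addrsE => /mapP [t]; rewrite mem_iota add0n => ht.
rewrite /Ad; case: ifP => h e.
- have := validt_good h => /andP [_ _].
  move: (validt_vK h); rewrite /vK => /andP [/andP [_ hc] _].
  have := cmp_col hc; lia.
- move: e; rewrite /Jd; lia.
Qed.

Lemma Mnew_out i : i < l -> (forall j0, goodp X i j0 -> ~~ (c * R <= j0 < c * R + R)) ->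
  Mnew i = M i.
Proof.
move=> hi H; rewrite /Mnew; case: ifP => // hin.
move: hin; rewrite addrsE => /mapP [t]; rewrite mem_iota add0n => ht.
rewrite /Ad; case: ifP => h e; last by move: e; rewrite /Jd; lia.
have /andP [g _] := validt_good h; rewrite -e in g.
have := H _ g; move: (validt_vK h); rewrite /vK => /andP [/andP [_ hc] _].
have hs := cmp_s hc.
have : t./2 %/ l.+1 < R by rewrite ltn_divLR.
rewrite /jof; set q := t./2 %/ l.+1; set cR := c * R.
move=> hq; rewrite leq_addr /= ltn_add2l hq //.
Qed.

Lemma Mnew_in i j0 : i < l -> goodp X i j0 -> c * R <= j0 < c * R + R ->
  Mnew i = pmin_at X i.
Proof.
move=> hi g /andP [hj1 hj2].
have hji : j0 <= i by case/andP: g.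
set r := j0 - c * R; set s := r * l.+1 + i; set t := s * 2 + 1.
have hrR : r < R by rewrite /r; lia.
have har : c * R + r < l by rewrite /r; lia.
have [hc hcol hj] := slot_cmp hrR har hi.
have hs2 : t./2 = s by rewrite /t muln2 addn1; exact: (half_bit_double s true).
have ht : t < w.
  have := cmp_s hc; rewrite -/s /t => h1; have := RL2; nia.
have hv : validt t.
  have hodd : odd t by rewrite /t oddD oddM andbF.
  rewrite /validt /vK hs2 hc hcol hj hodd andTb andTb.
  have -> : c * R + r = j0 by rewrite /r; lia.
  exact: g.
have hA : Ad t = i by rewrite /Ad hv hs2 hcol.
have hin : i \in addrs by rewrite addrsE; apply/mapP; exists t => //; rewrite mem_iota add0n.
have hidx : index i addrs = t.
  have -> : i = nth 0 addrs t by rewrite addrsE (nth_map 0) ?size_iota // nth_iota.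
  rewrite index_uniq // ?addrs_uniq // addrsE size_map size_iota //.
rewrite /Mnew hin hidx uword_mk_ultra // uword_umod // /cAV bsum_digit1 //; last first.
  move=> k hk; exact: AVd_lt.
rewrite /AVd hs2 hj.
have -> : c * R + r = j0 by rewrite /r; lia.
rewrite hM ?modn_small ?hX; try lia.
exact: good_pmin g.
Qed.

End ChunkVals.

Definition chunk_instr w l R c k : instr :=
  match k with
  | 0 => UConst 0 (cAP w l R c)
  | 1 => UGather 1 0
  | 2 => UConst 0 (cAQ w l R c)
  | 3 => UGather 2 0
  | 4 => UConst 0 (cEC w l R c)
  | 5 => UBin UAdd 1 1 0
  | 6 => UBin USub 1 1 2
  | 7 => UConst 0 (cHM w)
  | 8 => UBin UAnd 1 1 0
  | 9 => UConst 0 (cON w l R c)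
  | 10 => UBin USub 1 1 0
  | 11 => UConst 0 (cK w l R c)
  | 12 => UBin UAnd 1 1 0
  | 13 => UConst 0 (cJ w l)
  | 14 => UBin USub 1 0 1
  | 15 => UConst 0 (cAV w l R c)
  | 16 => UGather 2 0
  | _ => UScatter 1 2
  end.

Definition setup_instr w k : instr :=
  match k with
  | 0 => WConst 1 w
  | 1 => ULoad 0 0
  | _ => UStore 1 0
  end.

Definition Rof w l := w./2 %/ l.+1.
Definition nchunks w l := l %/ Rof w l + (0 < l %% Rof w l).

Definition instr_at w l pc : instr :=
  if pc < 3 then setup_instr w pc
  else chunk_instr w l (Rof w l) ((pc - 3) %/ 18) ((pc - 3) %% 18).

Definition prog w l : program := mkseq (instr_at w l) (3 + nchunks w l * 18).

Lemma lengthE T (s : seq T) : List.length s = size s.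
Proof. by elim: s => //= x s ->. Qed.

Lemma nth_error_mkseq (f : nat -> instr) n pc : pc < n -> List.nth_error (mkseq f n) pc = Some (f pc).
Proof.
rewrite /mkseq.
elim: n pc => [|n IH] pc //.
have -> : iota 0 n.+1 = iota 0 n ++ [:: n] by rewrite -addn1 iotaD.
rewrite map_cat => hpc.
case: (ltnP pc n) => h.
- rewrite List.nth_error_app1 ?IH //; rewrite lengthE size_map size_iota; exact/ltP.
- have e : pc = n by lia.
  rewrite List.nth_error_app2 lengthE size_map size_iota; last by apply/leP.
  by rewrite e Nat.sub_diag /=.
Qed.

Lemma nth_error_mkseq_out (f : nat -> instr) n pc : n <= pc -> List.nth_error (mkseq f n) pc = None.
Proof.
move=> h; apply/List.nth_error_None; rewrite /mkseq.
have := size_map f (iota 0 n); rewrite size_iota => e.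
apply/leP; by rewrite lengthE e.
Qed.

Lemma exec_stepE w p n s s' : step w p s = Some s' -> exec w p n.+1 s = exec w p n s'.
Proof. by move=> h /=; rewrite h. Qed.

Section Steps.
Variables (w : nat) (p : program) (pc : nat) (Rg U M : nat -> nat).
Lemma st_UConst d c : List.nth_error p pc = Some (UConst d c) ->
  step w p (State pc Rg U M) = Some (State pc.+1 Rg (upd U d (umod w c)) M).
Proof. by move=> h; rewrite /step h. Qed.
Lemma st_UGather d a : List.nth_error p pc = Some (UGather d a) ->
  step w p (State pc Rg U M) =
  Some (State pc.+1 Rg (upd U d (mk_ultra w (fun i => M (uword w (U a) i)))) M).
Proof. by move=> h; rewrite /step h. Qed.
Lemma st_UBin o d a b : List.nth_error p pc = Some (UBin o d a b) ->
  step w p (State pc Rg U M) = Some (State pc.+1 Rg (upd U d (ubin w o (U a) (U b))) M).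
Proof. by move=> h; rewrite /step h. Qed.
Lemma st_UScatter a s0 : List.nth_error p pc = Some (UScatter a s0) ->
  uniq [seq uword w (U a) i | i <- iota 0 w] ->
  step w p (State pc Rg U M) = Some (State pc.+1 Rg U
    (fun j => if j \in [seq uword w (U a) i | i <- iota 0 w]
              then uword w (U s0) (index j [seq uword w (U a) i | i <- iota 0 w]) else M j)).
Proof. by move=> h hu; rewrite /step h hu. Qed.
Lemma st_WConst d c : List.nth_error p pc = Some (WConst d c) ->
  step w p (State pc Rg U M) = Some (State pc.+1 (upd Rg d (wmod w c)) U M).
Proof. by move=> h; rewrite /step h. Qed.
Lemma st_ULoad d a : List.nth_error p pc = Some (ULoad d a) ->
  step w p (State pc Rg U M) = Some (State pc.+1 Rg (upd U d (mk_ultra w (fun i => M (Rg a + i)))) M).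
Proof. by move=> h; rewrite /step h. Qed.
Lemma st_UStore a s0 : List.nth_error p pc = Some (UStore a s0) ->
  step w p (State pc Rg U M) = Some (State pc.+1 Rg U
    (fun j => if (Rg a <= j) && (j < Rg a + w) then uword w (U s0) (j - Rg a) else M j)).
Proof. by move=> h; rewrite /step h. Qed.
End Steps.

Lemma exec_halt w p n s : halted p s -> exec w p n s = Some s.
Proof.
case: s => pc Rg U M; rewrite /halted /= => h.
have hn : List.nth_error p pc = None by apply/List.nth_error_None; rewrite lengthE; apply/leP.
elim: n => [|n IH] //=.
by rewrite /step hn.
Qed.

Lemma exec_add w p a b s : exec w p (a + b) s = obind (exec w p b) (exec w p a s).
Proof.
elim: a s => [|a IH] s //=.
case: (step w p s) => [s'|] //=.
Qed.

Lemma Rof_le w l : Rof w l * l.+1 <= w./2.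
Proof. exact: leq_divM. Qed.

Lemma nchunks_lt w l c : 0 < Rof w l -> c < nchunks w l -> c * Rof w l < l.
Proof.
move=> hR; rewrite /nchunks => hc.
have e := divn_eq l (Rof w l); have hr := ltn_pmod l hR.
move: hc e hr; set q := l %/ _; set r := l %% _; set R := Rof w l.
case: (ltnP 0 r) => hr0 /= hc e hr; nia.
Qed.

Lemma nchunks_ge w l j : 0 < Rof w l -> j < l -> j %/ Rof w l < nchunks w l.
Proof.
move=> hR hj; rewrite /nchunks.
have e := divn_eq l (Rof w l); have hr := ltn_pmod l hR.
have ej := divn_eq j (Rof w l); have hrj := ltn_pmod j hR.
move: e hr ej hrj; set q := l %/ _; set r := l %% _; set R := Rof w l.
set qj := j %/ R; set rj := j %% R.
case: (ltnP 0 r) => hr0 /= e hr ej hrj; nia.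
Qed.

Lemma nth_chunk w l c k : c < nchunks w l -> k < 18 ->
  List.nth_error (prog w l) (k + (3 + c * 18)) = Some (chunk_instr w l (Rof w l) c k).
Proof.
move=> hc hk; rewrite nth_error_mkseq; last by nia.
rewrite /instr_at ifF; last by lia.
have -> : k + (3 + c * 18) - 3 = c * 18 + k by lia.
by rewrite divnMDl // (divn_small hk) addn0 modnMDl modn_small.
Qed.

Lemma upd_same f i v : upd f i v i = v.
Proof. by rewrite /upd eqxx. Qed.
Lemma upd_other f i j v : j != i -> upd f i v j = f j.
Proof. by rewrite /upd => /negbTE ->. Qed.

Lemma u01 f v : upd f 0 v 1 = f 1. Proof. by []. Qed.
Lemma u02 f v : upd f 0 v 2 = f 2. Proof. by []. Qed.
Lemma u10 f v : upd f 1 v 0 = f 0. Proof. by []. Qed.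
Lemma u12 f v : upd f 1 v 2 = f 2. Proof. by []. Qed.
Lemma u20 f v : upd f 2 v 0 = f 0. Proof. by []. Qed.
Lemma u21 f v : upd f 2 v 1 = f 1. Proof. by []. Qed.
Ltac usimp := do 6 rewrite ?upd_same ?u01 ?u02 ?u10 ?u12 ?u20 ?u21.

Section ExecChunk.
Variables (w l c : nat) (X : seq nat) (Rg U M : nat -> nat).
Notation R := (Rof w l).
Hypothesis hR : 0 < R.
Hypothesis hc : c < nchunks w l.
Hypothesis hlw : l < w.
Hypothesis hB : 8 * w <= 2 ^ w.
Hypothesis hX : forall k, k < l -> nth 0 X k < 2 ^ w.
Hypothesis hM : forall k, k < l -> M (w + k) = nth 0 X k.
Hypothesis hZ : M (2 * w) = 0.

Lemma exec_chunk : exists U', exec w (prog w l) 18 (State (3 + c * 18) Rg U M) =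
   Some (State (18 + (3 + c * 18)) Rg U' (Mnew w l R c X M)).
Proof.
have hcR := nchunks_lt hR hc.
have hRL := Rof_le w l.
have nt := fun k (hk : k < 18) => nth_chunk hc hk.
rewrite (exec_stepE _ (st_UConst _ _ _ _ (nt 0 isT))).
rewrite (exec_stepE _ (st_UGather _ _ _ _ (nt 1 isT))).
usimp.
rewrite (@U1_eq w l R c X M hRL hcR hlw hB hX hM hZ).
rewrite (exec_stepE _ (st_UConst _ _ _ _ (nt 2 isT))).
rewrite (exec_stepE _ (st_UGather _ _ _ _ (nt 3 isT))).
usimp.
rewrite (@U2_eq w l R c X M hRL hcR hlw hB hX hM hZ).
rewrite (exec_stepE _ (st_UConst _ _ _ _ (nt 4 isT))).
rewrite (exec_stepE _ (st_UBin _ _ _ _ (nt 5 isT))).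
usimp.
rewrite (@U3_eq w l R c X M hRL hcR hlw hB hX hZ).
rewrite (exec_stepE _ (st_UBin _ _ _ _ (nt 6 isT))). usimp.
rewrite (@U4_eq w l R c X M hRL hcR hlw hB hX hZ).
rewrite (exec_stepE _ (st_UConst _ _ _ _ (nt 7 isT))).
rewrite (exec_stepE _ (st_UBin _ _ _ _ (nt 8 isT))). usimp.
rewrite /ubin (@U5_eq w l R c X M hRL hcR hlw hB hX hZ) (@U5_rows w l R c X hRL hX).
rewrite (exec_stepE _ (st_UConst _ _ _ _ (nt 9 isT))).
rewrite (exec_stepE _ (st_UBin _ _ _ _ (nt 10 isT))). usimp.
rewrite (@U6_eq w l R c X M hRL hcR hlw hB hX hZ).
rewrite (exec_stepE _ (st_UConst _ _ _ _ (nt 11 isT))).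
rewrite (exec_stepE _ (st_UBin _ _ _ _ (nt 12 isT))). usimp.
rewrite /ubin (@U7_eq w l R c X M hRL hcR hlw hB hX hZ).
rewrite (exec_stepE _ (st_UConst _ _ _ _ (nt 13 isT))).
rewrite (exec_stepE _ (st_UBin _ _ _ _ (nt 14 isT))). usimp.
rewrite (@U8_eq w l R c X M hRL hcR hlw hB hZ).
rewrite (exec_stepE _ (st_UConst _ _ _ _ (nt 15 isT))).
rewrite (exec_stepE _ (st_UGather _ _ _ _ (nt 16 isT))). usimp.
have hu := @addrs_uniq w l R c X M hRL hcR hlw hB hZ.
rewrite (exec_stepE _ (@st_UScatter w (prog w l) _ _ _ _ 1 2 (nt 17 isT) _)); last first.
  usimp; exact: hu.
usimp.
eexists; reflexivity.
Qed.
End ExecChunk.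

Lemma nth_setup w l k : k < 3 -> List.nth_error (prog w l) k = Some (setup_instr w k).
Proof. move=> hk; rewrite nth_error_mkseq; last by lia. by rewrite /instr_at hk. Qed.

Lemma obindS (A B : Type) (f : A -> option B) x : obind f (Some x) = f x.
Proof. by []. Qed.

Section Run.
Variables (w l : nat) (X : seq nat).
Notation R := (Rof w l).
Hypothesis hR : 0 < R.
Hypothesis hlw : l < w.
Hypothesis hB : 8 * w <= 2 ^ w.
Hypothesis hsz : size X = l.
Hypothesis hXa : all (fun x => x < 2 ^ w) X.

Lemma hX : forall k, k < l -> nth 0 X k < 2 ^ w.
Proof. move=> k hk; apply: (allP hXa); apply: mem_nth; by rewrite hsz. Qed.

Definition Inv c (M : nat -> nat) :=
  [/\ forall k, k < l -> M (w + k) = nth 0 X k, M (2 * w) = 0 &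
      forall i j0, i < l -> goodp X i j0 -> j0 %/ R < c -> M i = pmin_at X i].

Lemma run_setup : exists Rg U M, exec w (prog w l) 3 (init_state X) = Some (State 3 Rg U M) /\ Inv 0 M.
Proof.
rewrite /init_state.
rewrite (exec_stepE _ (st_WConst _ _ _ _ (nth_setup w l (isT : 0 < 3)))).
rewrite (exec_stepE _ (st_ULoad _ _ _ _ (nth_setup w l (isT : 1 < 3)))).
rewrite (exec_stepE _ (st_UStore _ _ _ _ (nth_setup w l (isT : 2 < 3)))).
do 3 eexists; split; first reflexivity.
have hw : wmod w w = w by rewrite /wmod modn_small //; lia.
rewrite /upd /= hw.
split.
- move=> k hk; rewrite leq_addr /= ltn_add2l (ltn_trans hk hlw) /= addKn.
  rewrite uword_mk_ultra ?(ltn_trans hk hlw) //= add0n hsz hk modn_small //; exact: hX.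
- rewrite ifF; last by apply/negbTE; rewrite negb_and -ltnNge -leqNgt; lia.
  rewrite hsz ifF //; lia.
- by [].
Qed.

Lemma run_chunks c : c <= nchunks w l -> forall Rg U M, Inv 0 M ->
  exists U' M', exec w (prog w l) (c * 18) (State 3 Rg U M) = Some (State (3 + c * 18) Rg U' M')
                /\ Inv c M'.
Proof.
move=> + Rg U M hI0.
elim: c => [|c IH] hc.
  by exists U, M; rewrite mul0n addn0.
have [U' [M' [he [h1 h2 h3]]]] := IH (ltnW hc).
have [U'' hch] := @exec_chunk w l c X Rg U' M' hR hc hlw hB hX h1 h2.
exists U'', (Mnew w l R c X M').
rewrite mulSnr exec_add he obindS hch; split.
  by congr (Some (State _ _ _ _)); lia.
have hcR := nchunks_lt hR hc.
have hRL := Rof_le w l.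
split.
- move=> k hk; rewrite (@Mnew_keep w l R c X M' hRL hcR hlw hB h2) ?h1 //; lia.
- by rewrite (@Mnew_keep w l R c X M' hRL hcR hlw hB h2) // leqnn andbT leq_pmull.
- move=> i j0 hi g hj.
  case: (ltnP (j0 %/ R) c) => hj2.
  + rewrite (@Mnew_out w l R c X M' hRL hcR hlw hB h2) //; first exact: h3 g hj2.
    move=> j1 g1; rewrite -(good_uniq g g1).
    rewrite -leq_divRL // leqNgt hj2 /=. done.
  + apply: (@Mnew_in w l R c X M' hRL hcR hlw hB hX h1 h2 i j0 hi g).
    have e : j0 %/ R = c by lia.
    rewrite -e leq_trunc_div /=.
    by rewrite {1}(divn_eq j0 R) ltn_add2l ltn_pmod.
Qed.

End Run.

Lemma run_all w l X T : 0 < Rof w l -> l < w -> 8 * w <= 2 ^ w -> size X = l ->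
  all (fun x => x < 2 ^ w) X -> 3 + nchunks w l * 18 <= T ->
  exists s, exec w (prog w l) T (init_state X) = Some s /\ halted (prog w l) s /\
    forall i, i < l -> Defs.mem s i = pmin_at X i.
Proof.
move=> hR hlw hB hsz hXa hT.
have [Rg [U [M [hs hI]]]] := run_setup hR hlw hB hsz hXa.
have [U' [M' [he [h1 h2 h3]]]] := run_chunks hR hlw hB hsz hXa (leqnn (nchunks w l)) Rg U hI.
have eT : T = 3 + (nchunks w l * 18 + (T - (3 + nchunks w l * 18))) by lia.
exists (State (3 + nchunks w l * 18) Rg U' M').
rewrite eT exec_add hs obindS exec_add he obindS exec_halt; last first.
  by rewrite /halted /prog size_mkseq.
split => //; split; first by rewrite /halted /prog size_mkseq.
move=> i hi /=.
have [j hj g] := good_ex X i.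
apply: (h3 i j hi g); apply: nchunks_ge => //; lia.
Qed.

Lemma pow_ge8 n : 8 * (n + 6) <= 2 ^ (n + 6).
Proof.
elim: n => [|n IH] //.
rewrite addSn expnS; lia.
Qed.


Theorem lemma3 :
  forall C : nat, exists w0 T : nat,
    forall w l : nat, w0 <= w -> l * l <= C * C * w ->
      exists p : program, computes_pmin_in w l T p.
Proof.
move=> C.
set D := C.+1.
set K := 8 * D * D.
exists (16 * D * D + 64), (3 + K * 18) => w l hw hl.
exists (prog w l) => X hsz hXa.
have hlD : l * l <= D * D * w by apply: (leq_trans hl); rewrite /D; nia.
have hD1 : 1 <= D by [].
have h4l : 4 * l <= w.
  rewrite leqNgt; apply/negP => h.
  have h1 : w * w < (4 * l) * (4 * l) by apply: ltn_mul.
  have h2 : 16 * (D * D) * w <= w * w by rewrite leq_mul2r; apply/orP; right; lia.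
  have h3 : (4 * l) * (4 * l) = 16 * (l * l) by rewrite mulnCA !mulnA.
  have h4 : 16 * (l * l) <= 16 * (D * D * w) by rewrite leq_mul2l hlD orbT.
  move: h1 h2 h4; rewrite h3 !mulnA; lia.
have hB : 8 * w <= 2 ^ w.
  have := pow_ge8 (w - 6); have -> : w - 6 + 6 = w by lia. done.
have hlw : l < w by lia.
set S := w./2.
have hS : w <= S * 2 + 1 by have := odd_double_half w; rewrite -muln2; case: (odd w) => /=; lia.
set R := S %/ l.+1.
have hRdef : Rof w l = R by [].
have hSR : S < R * l.+1 + l.+1.
  by rewrite /R {1}(divn_eq S l.+1) ltn_add2l ltn_pmod.
have hR : 0 < R.
  rewrite lt0n; apply/eqP => h0; rewrite h0 mul0n add0n in hSR; lia.
have hKR : l <= K * R.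
  set P := D * D; set a := R * l.+1.
  have hP1 : 1 <= P by rewrite /P muln_gt0.
  have hw16 : 16 * P <= w by move: hw; rewrite /P; lia.
  have g : w - 2 <= 4 * a by rewrite /a; lia.
  have f1 : P * (w - 2) <= P * (4 * a) by rewrite leq_mul2l g orbT.
  rewrite mulnBr mulnCA in f1.
  have f2 : w <= P * w by rewrite leq_pmull.
  have f3 := hlD.
  have h1 : l * l.+1 <= K * a.
    rewrite /K mulnS -!mulnA -/P; lia.
  rewrite leqNgt; apply/negP => h.
  have : K * R * l.+1 < l * l.+1 by rewrite ltn_mul2r h.
  rewrite -mulnA -/a; lia.
have hnc : nchunks w l <= K.
  rewrite /nchunks /Rof -/S -/R.
  have e := divn_eq l R; have hr := ltn_pmod l hR.
  move: e hr; set q := l %/ R; set r := l %% R => e hr.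
  case: (ltnP 0 r) => hr0.
  - have : q * R < K * R by lia.
    rewrite ltn_mul2r => /andP [_ hq]. by rewrite /= addn1.
  - have : q * R <= K * R by lia.
    rewrite leq_mul2r => /orP [h0|hq].
      by move: hR; rewrite (eqP h0).
    by rewrite /= addn0.
apply: run_all => //.
by rewrite leq_add2l leq_mul2r hnc orbT.
Qed.
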